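(* Let $\mathcal{C}_1=(C_1,E_1,\lambda_1)$ and $\mathcal{C}_2=(C_2,E_2,\lambda_2)$ be concept representation classes and let $(f,h)$ be a PC reduction from $\mathcal{C}_1$ to $\mathcal{C}_2$. If, for some concept $c\in C_1$ and some $n$, every set of labeled examples that uniquely characterizes $c$ in $\mathcal{C}_1$ has size at least $n$, then every set of labeled examples that uniquely characterizes $f(c)$ in $\mathcal{C}_2$ has size at least $n$.
   Context: A concept representation class is a triple $(C,E,\lambda)$ with $C$ a set of concepts, $E$ a set of examples, and $\lambda:C\to\mathcal{P}(E)$; concepts $c,c'$ are equivalent if $\lambda(c)=\lambda(c')$. A labeled example is a pair $(e,\mathrm{lab})$ with $e\in E$, $\mathrm{lab}\in\{0,1\}$; $c$ fits it if ($e\in\lambda(c)$ iff $\mathrm{lab}=1$). A set $S$ of labeled examples uniquely characterizes $c$ if $c$ fits all of $S$ and every concept fitting all of $S$ is equivalent to $c$. A PC reduction from $\mathcal{C}_1$ to $\mathcal{C}_2$ is a pair $(f,h)$ with $f:C_1\to C_2$ and $h:E_1\to E_2$ such that (i) for all $c\in C_1$, $e\in E_1$: $e\in\lambda_1(c)$ iff $h(e)\in\lambda_2(f(c))$; and (ii) for each $e\in E_2$, either $e\in\lambda_2(f(c))$ for all $c\in C_1$, or $e\in\lambda_2(f(c))$ for no $c\in C_1$, or there is $e'\in E_1$ with $\{c\in C_1\mid e\in\lambda_2(f(c))\}=\{c\in C_1\mid e'\in\lambda_1(c)\}$. *)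

(* Defs.v *)
From Stdlib Require Import List.
Import ListNotations.

(** A concept representation class (C, E, lambda), with lambda c viewed as
    the subset {e | lam c e} of E. *)
Record ConceptClass := {
  concept : Type;
  example : Type;
  lam : concept -> example -> Prop
}.

Definition equivalent (K : ConceptClass) (c c' : concept K) : Prop :=
  forall e, lam K c e <-> lam K c' e.

Definition labeled (K : ConceptClass) : Type := (example K * bool)%type.

Definition fits (K : ConceptClass) (c : concept K) (x : labeled K) : Prop :=
  lam K c (fst x) <-> snd x = true.

Definition labset (K : ConceptClass) : Type := labeled K -> Prop.

Definition uniquely_characterizes (K : ConceptClass) (S : labset K)
    (c : concept K) : Prop :=
  (forall x, S x -> fits K c x) /\
  (forall c', (forall x, S x -> fits K c' x) -> equivalent K c' c).

(** |S| >= n : S contains n pairwise distinct elements. *)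
Definition size_at_least {A : Type} (S : A -> Prop) (n : nat) : Prop :=
  exists l : list A, length l = n /\ NoDup l /\ forall x, In x l -> S x.

Definition PC_reduction (K1 K2 : ConceptClass)
    (f : concept K1 -> concept K2) (h : example K1 -> example K2) : Prop :=
  (forall c e, lam K1 c e <-> lam K2 (f c) (h e)) /\
  (forall e : example K2,
      (forall c, lam K2 (f c) e) \/
      (forall c, ~ lam K2 (f c) e) \/
      (exists e' : example K1, forall c, lam K2 (f c) e <-> lam K1 c e')).

(* Main.v *)
Require Import Defs.
From Stdlib Require Import List ClassicalEpsilon.
Import ListNotations.

Section Aux.
Variables (K1 K2 : ConceptClass) (f : concept K1 -> concept K2).

Definition Pr (e2 : example K2) (e1 : example K1) : Prop :=
  forall c, lam K2 (f c) e2 <-> lam K1 c e1.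

Definition g (e2 : example K2) : option (example K1) :=
  match excluded_middle_informative (exists e1, Pr e2 e1) with
  | left H => Some (proj1_sig (constructive_indefinite_description _ H))
  | right _ => None
  end.

Lemma g_some e2 e1 : g e2 = Some e1 -> Pr e2 e1.
Proof.
  unfold g. destruct excluded_middle_informative as [H|H]; [|discriminate].
  destruct (constructive_indefinite_description _ H) as [x Hx]; simpl.
  intro E; injection E; intros; subst; auto.
Qed.

Lemma g_ex e2 e1 : Pr e2 e1 -> exists e1', g e2 = Some e1'.
Proof.
  intro P. unfold g. destruct excluded_middle_informative as [H|H].
  - eexists; reflexivity.
  - exfalso; apply H; eauto.
Qed.

Definition F (x : labeled K2) : option (labeled K1) :=
  match g (fst x) with Some e1 => Some (e1, snd x) | None => None end.

Lemma lift_list (S2 : labset K2) (l1 : list (labeled K1)) :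
  NoDup l1 -> (forall x, In x l1 -> exists y, S2 y /\ F y = Some x) ->
  exists l2, length l2 = length l1 /\ NoDup l2 /\
    forall y, In y l2 -> S2 y /\ exists z, F y = Some z /\ In z l1.
Proof.
  induction l1 as [|x l1 IH]; intros ND Hin.
  - exists []; simpl; split; [reflexivity|split; [constructor|intros ? []]].
  - inversion ND; subst.
    destruct IH as [l2 [Hl [ND2 HH2]]]; auto.
    { intros z Hz; apply Hin; simpl; auto. }
    destruct (Hin x (or_introl eq_refl)) as [y [Sy Fy]].
    exists (y :: l2); simpl; split; [congruence|split].
    + constructor; auto. intro Hy. destruct (HH2 y Hy) as [_ [z [Fz Iz]]].
      rewrite Fy in Fz; injection Fz; intros; subst; contradiction.
    + intros y' [<-|Hy'].
      * split; auto. exists x; auto.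
      * destruct (HH2 y' Hy') as [Sy' [z [Fz Iz]]]; split; eauto.
Qed.
End Aux.

Theorem propositionA5 (K1 K2 : ConceptClass)
    (f : concept K1 -> concept K2) (h : example K1 -> example K2)
    (Hred : PC_reduction K1 K2 f h) (c : concept K1) (n : nat)
    (Hlow : forall S : labset K1, uniquely_characterizes K1 S c -> size_at_least S n) :
  forall S : labset K2, uniquely_characterizes K2 S (f c) -> size_at_least S n.
Proof.
  intros S2 [Fit2 Uni2].
  destruct Hred as [Hr1 Hr2].
  set (S1 := fun x1 : labeled K1 => exists y, S2 y /\ F K1 K2 f y = Some x1).
  assert (U : uniquely_characterizes K1 S1 c).
  { split.
    - intros [e1 b] [[e2 b2] [Sy Fy]]. unfold F in Fy; simpl in Fy.
      destruct (g K1 K2 f e2) eqn:G; [|discriminate].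
      injection Fy; intros; subst.
      apply g_some in G. specialize (Fit2 _ Sy). unfold fits in *; simpl in *.
      rewrite <- (G c); auto.
    - intros c' Hc'.
      assert (Eq : equivalent K2 (f c') (f c)).
      { apply Uni2. intros [e2 b] Sy. specialize (Fit2 _ Sy) as Fc.
        unfold fits in *; simpl in *.
        destruct (Hr2 e2) as [A|[A|[e1 A]]].
        - split; intro; [apply Fc, A | apply A].
        - split; intro Hx; [exfalso; eapply A; eauto|].
          exfalso; apply (A c), Fc, Hx.
        - destruct (g_ex K1 K2 f e2 e1 A) as [e1' G].
          assert (Hs : S1 (e1', b)).
          { exists (e2, b); split; auto. unfold F; simpl; rewrite G; auto. }
          specialize (Hc' _ Hs). unfold fits in Hc'; simpl in Hc'.
          apply g_some in G. rewrite (G c'); auto. }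
      intro e. rewrite Hr1, Hr1. apply Eq. }
  destruct (Hlow S1 U) as [l1 [Hl [ND Hin]]].
  destruct (lift_list K1 K2 f S2 l1 ND Hin) as [l2 [Hl2 [ND2 HH2]]].
  exists l2; repeat split; auto.
  - congruence.
  - intros y Hy; apply HH2; auto.
Qed.
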